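(* Let $(G_n)$ be a sequence of finite graphs with $v_n:=|V(G_n)|$. Let $W_n\subset V(G_n)$ satisfy $\lim_n |W_n|/v_n=0$. For $R>0$ and $t>0$ let $$s_n(R,t):=\bigl|\{x\in V(G_n): |V_R(x)|>t\}\bigr| \quad\text{and}\quad w_n(R):=\bigl|\{x\in V(G_n): V_R(x)\cap W_n\neq\emptyset\}\bigr|,$$ where $V_R(x)$ is the vertex set of the ball of radius $R$ about $x$ in $G_n$ (graph distance). If for each $R>0$ we have $\lim_{t\to\infty}\limsup_{n\to\infty}s_n(R,t)/v_n=0$, then for each $R>0$ we have $\lim_{n\to\infty}w_n(R)/v_n=0$. *)

(* Defs.v *)
From HB Require Import structures.
From mathcomp Require Import all_boot all_order all_algebra.
From mathcomp Require Import all_classical all_reals all_analysis.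
Set Implicit Arguments. Unset Strict Implicit. Unset Printing Implicit Defensive.
Import Order.TTheory GRing.Theory Num.Theory.

(* V_R(x): vertices at graph distance <= R from x, i.e. reachable from x by an
   e-path with at most R edges. *)
Definition ball (V : finType) (e : rel V) (R : nat) (x : V) : {set V} :=
  [set y | `[< exists p : seq V, [/\ path e x p, last x p = y & (size p <= R)%N] >] ].

Definition s_count (R : realType) (V : finType) (e : rel V) (r : nat) (t : R) : nat :=
  #|[set x : V | (#|ball e r x|%:R > t)%R]|.

Definition w_count (V : finType) (e : rel V) (W : {set V}) (r : nat) : nat :=
  #|[set x : V | ~~ [disjoint ball e r x & W]]|.

(* Main.v *)
Require Import Defs.
From HB Require Import structures.
From mathcomp Require Import all_boot all_order all_algebra.
From mathcomp Require Import all_classical all_reals all_analysis.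
Import Order.TTheory GRing.Theory Num.Theory.
Import numFieldNormedType.Exports.
Local Open Scope classical_set_scope.
Local Open Scope ring_scope.

Lemma ball_sym (V : finType) (e : rel V) (esym : symmetric e) r x y :
  y \in Defs.ball e r x -> x \in Defs.ball e r y.
Proof.
rewrite !inE => -[p [hp hl hs]].
apply: (ex_intro _ (seq.rev (belast x p))); split.
- rewrite -hl rev_path; rewrite (@eq_path _ _ e) // => a b; exact: esym.
- rewrite -hl; case: p {hp hl hs} => [|a p] //; by rewrite [belast _ _]/= rev_cons last_rcons.
- by rewrite size_rev size_belast.
Qed.

Lemma ball_trans (V : finType) (e : rel V) r x y z :
  y \in Defs.ball e r x -> z \in Defs.ball e r y -> z \in Defs.ball e (r + r) x.
Proof.
rewrite !inE => -[p [hp hl hs]] [q [hq hl' hs']].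
apply: (ex_intro _ (p ++ q)); split.
- by rewrite cat_path hp hl hq.
- by rewrite last_cat hl.
- by rewrite size_cat leq_add.
Qed.

Lemma card_bigcup_le (T U : finType) (A : pred T) (f : T -> {set U}) :
  (#|(\bigcup_(i in A) f i)%SET| <= \sum_(i in A) #|f i|)%N.
Proof.
elim/big_rec2: _ => [|i n S _ h]; first by rewrite cards0.
rewrite cardsU; apply: leq_trans (leq_subr _ _) _; exact: leq_add.
Qed.

Lemma count_bound (R : realType) (V : finType) (e : rel V) (esym : symmetric e)
  (W : {set V}) r (t : R) : 0 <= t ->
  (w_count e W r)%:R <= (s_count e (r + r) t)%:R + t * #|W|%:R.
Proof.
move=> t0.
pose P := fun y => (y \in W) && (#|Defs.ball e r y|%:R <= t).
have sub : [set x : V | ~~ [disjoint Defs.ball e r x & W]]%SET \subset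
   [set x : V | (#|Defs.ball e (r + r) x|%:R > t)]%SET :|: (\bigcup_(y | P y) Defs.ball e r y)%SET.
  apply/fintype.subsetP => x; rewrite !inE => /pred0Pn [y /andP [yb yW]].
  case: (ltrP t (#|Defs.ball e (r + r) x|%:R)) => [//|hle] /=.
  apply/finset.bigcupP; exists y; last exact: ball_sym.
  rewrite /P; apply/andP; split; first exact: yW.
  apply: le_trans hle; rewrite ler_nat; apply: subset_leq_card.
  apply/fintype.subsetP => z; exact: ball_trans.
have h2 := leq_trans (subset_leq_card sub) (leq_card_setU _ _).
apply: (le_trans (y := (s_count e (r + r) t + #|(\bigcup_(y | P y) Defs.ball e r y)%SET|)%:R)).
  by rewrite ler_nat.
rewrite natrD lerD2l.
apply: (le_trans (y := (\sum_(y | P y) #|Defs.ball e r y|)%:R)).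
  by rewrite ler_nat card_bigcup_le.
rewrite natr_sum.
apply: (le_trans (y := \sum_(y | P y) t)).
  by apply: ler_sum => y /andP [].
rewrite sumr_const -[t *+ _]mulr_natr ler_wpM2l // ler_nat.
apply: subset_leq_card; apply/fintype.subsetP => y; rewrite unfold_in => /andP [] //.
Qed.

Theorem lemma3p12 (R : realType) (V : nat -> finType) (e : forall n, rel (V n))
  (esym : forall n, symmetric (e n))
  (W : forall n, {set V n})
  (hW : (fun n => (#|W n|%:R / #|V n|%:R : R)) @ \oo --> 0)
  (hs : forall r : nat, (0 < r)%N ->
     (fun t : R =>
        limn_esup (fun n => (((s_count (e n) r t)%:R / #|V n|%:R : R))%:E))
       @ +oo%R --> 0%E) :
  forall r : nat, (0 < r)%N ->
    (fun n => ((w_count (e n) (W n) r)%:R / #|V n|%:R : R)) @ \oo --> 0.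
Proof.
move=> r r0; apply/cvgrPdist_lt => eps eps0.
have e2 : 0 < eps / 2 by rewrite divr_gt0.
have [hfin hfine] := proj1 (fine_cvgP _ _) (hs (r + r)%N (ltn_addl r r0)).
have hlt := cvgr_lt _ hfine _ e2.
have [t [[tfin tlt] t0]] := filter_ex (filterI (filterI hfin (hlt _)) (nbhs_pinfty_ge (real0 R))).
set u := (fun n => _) in tfin tlt.
have ult : (limn_esup u < (eps / 2)%:E)%E.
  by rewrite -(fineK tfin) lte_fin.
have hl : limn (esups u) = ereal_inf (range (esups u)).
  by apply: cvg_lim => //; exact: cvg_esups_inf.
rewrite limn_esup_lim hl in ult.
have [_ [N _ <-] hN] := ereal_inf_lt ult.
have hWt : (fun n => t * (#|W n|%:R / #|V n|%:R : R)) @ \oo --> 0.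
  by rewrite -(mulr0 t); apply: cvgMl_tmp.
have hWlt := cvgr_lt _ hWt _ e2.
near=> n.
have un : (u n <= esups u N)%E.
  apply: ereal_sup_ubound; exists n => //=. near: n; by exists N.
have sn : ((s_count (e n) (r + r) t)%:R / #|V n|%:R : R) < eps / 2.
  by rewrite -lte_fin; apply: le_lt_trans un hN.
have wn : 0 <= ((w_count (e n) (W n) r)%:R / #|V n|%:R : R) by rewrite divr_ge0.
rewrite sub0r normrN ger0_norm //.
apply: (le_lt_trans (y := (s_count (e n) (r + r) t)%:R / #|V n|%:R + t * (#|W n|%:R / #|V n|%:R))).
  rewrite mulrA -mulrDl ler_wpM2r ?invr_ge0 //; exact: count_bound.
rewrite [eps](splitr eps) ltrD //; near: n; exact: hWlt.
Unshelve. all: by end_near.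
Qed.
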